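(* Under the setting below, for all $\mathbf k\neq\mathbf h$ in $(\mathbb Z/p\mathbb Z)^{\mathsf N}$ one has $\langle\mathbf k|\mathbf h\rangle=0$. Moreover there is a constant $C_{\mathsf N}$ (independent of $\mathbf h$) such that for every $\mathbf h=(h_1,\dots,h_{\mathsf N})$ with $h_a\in\{0,\dots,p-1\}$, $$\langle\mathbf h|\mathbf h\rangle=\frac{C_{\mathsf N}\prod_{a=1}^{[\mathsf N]}\prod_{j=1}^{h_a}a(\eta_a^{(j)})/\bar a(\eta_a^{(j-1)})}{\prod_{1\le b<a\le[\mathsf N]}\left(\eta_a^{(h_a)}/\eta_b^{(h_b)}-\eta_b^{(h_b)}/\eta_a^{(h_a)}\right)} .$$ (In particular $\langle\mathbf h|\mathbf h\rangle$ does not depend on $h_{\mathsf N}$ when $\mathsf N$ is even.)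
   Context: Fix integers $\mathsf N\ge1$ and $p\ge3$ odd, and $q\in\mathbb C$ with $q^p=1$ and $q^2$ a primitive $p$-th root of unity. Put $\mathtt e_{\mathsf N}=1$ if $\mathsf N$ is even, $\mathtt e_{\mathsf N}=0$ if $\mathsf N$ is odd, and $[\mathsf N]=\mathsf N-\mathtt e_{\mathsf N}$. Let $\mathcal R$ be a finite-dimensional complex vector space, $\mathcal L$ its dual, $\langle\cdot|\cdot\rangle$ the duality pairing, and $\lambda\mapsto\mathsf A(\lambda),\mathsf B(\lambda)$ families of operators on $\mathcal R$ (acting on $\mathcal L$ from the right by transposition); in the paper they are entries of the monodromy matrix $\mathsf M(\lambda)=\mathsf L_{\mathsf N}(\lambda)\cdots\mathsf L_1(\lambda)=\begin{pmatrix}\mathsf A&\mathsf B\\ \mathsf C&\mathsf D\end{pmatrix}$ of the lattice sine-Gordon model with parameters $\kappa_n,\xi_n\neq0$. Let $\eta_1^{(0)},\dots,\eta_{\mathsf N}^{(0)}$ be nonzero complex numbers, $\eta_a^{(h)}=q^h\eta_a^{(0)}$ (depending only on $h$ mod $p$), and assume $(\eta_a^{(h)})^2\ne(\eta_b^{(h')})^2$ for all $a\ne b$ in $\{1,\dots,[\mathsf N]\}$ and all $h,h'$. Let $\textsc k=\prod_{n=1}^{\mathsf N}\kappa_n/i\neq0$, $\mathbf e_a$ the $a$-th unit vector of $(\mathbb Z/p\mathbb Z)^{\mathsf N}$, and for $\mathbf k\in(\mathbb Z/p\mathbb Z)^{\mathsf N}$ put $\mathsf b_{\mathbf k}(\lambda)=\textsc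 k\,(\eta_{\mathsf N}^{(k_{\mathsf N})})^{\mathtt e_{\mathsf N}}\prod_{a=1}^{[\mathsf N]}(\lambda/\eta_a^{(k_a)}-\eta_a^{(k_a)}/\lambda)$ and $\eta_{\mathbf k,\mathsf A}=\prod_{n=1}^{\mathsf N}\xi_n/\prod_{n=1}^{\mathsf N-1}\eta_n^{(k_n)}$. Let $a,\bar a$ be complex functions with $\bar a(\eta_a^{(j)})\neq0$ for all $a,j$. Left SOV basis: a basis $\{\langle\mathbf k|\}_{\mathbf k\in(\mathbb Z/p\mathbb Z)^{\mathsf N}}$ of $\mathcal L$ with $\langle\mathbf k|\mathsf B(\lambda)=\mathsf b_{\mathbf k}(\lambda)\langle\mathbf k|$ and $$\langle\mathbf k|\mathsf A(\lambda)=\mathtt e_{\mathsf N}\frac{\mathsf b_{\mathbf k}(\lambda)}{\eta_{\mathsf N}^{(k_{\mathsf N})}}\Big(\frac{\lambda}{\eta_{\mathbf k,\mathsf A}}\langle\mathbf k-\mathbf e_{\mathsf N}|-\frac{\eta_{\mathbf k,\mathsf A}}{\lambda}\langle\mathbf k+\mathbf e_{\mathsf N}|\Big)+\sum_{a=1}^{[\mathsf N]}\prod_{b\ne a,\,b\le[\mathsf N]}\frac{\lambda/\eta_b^{(k_b)}-\eta_b^{(k_b)}/\lambda}{\eta_a^{(k_a)}/\eta_b^{(k_b)}-\eta_b^{(k_b)}/\eta_a^{(k_a)}}\,a(\eta_a^{(k_a)})\,\langle\mathbf k-\mathbf e_a|.$$ Right SOV basis: a basis $\{|\mathbf k\rangle\}$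 of $\mathcal R$ with $\mathsf B(\lambda)|\mathbf k\rangle=\mathsf b_{\mathbf k}(\lambda)|\mathbf k\rangle$ and $$\mathsf A(\lambda)|\mathbf k\rangle=\mathtt e_{\mathsf N}\frac{\mathsf b_{\mathbf k}(\lambda)}{\eta_{\mathsf N}^{(k_{\mathsf N})}}\Big(\frac{\lambda}{\eta_{\mathbf k,\mathsf A}}|\mathbf k+\mathbf e_{\mathsf N}\rangle-\frac{\eta_{\mathbf k,\mathsf A}}{\lambda}|\mathbf k-\mathbf e_{\mathsf N}\rangle\Big)+\sum_{a=1}^{[\mathsf N]}|\mathbf k+\mathbf e_a\rangle\prod_{b\ne a,\,b\le[\mathsf N]}\frac{\lambda/\eta_b^{(k_b)}-\eta_b^{(k_b)}/\lambda}{\eta_a^{(k_a)}/\eta_b^{(k_b)}-\eta_b^{(k_b)}/\eta_a^{(k_a)}}\,\bar a(\eta_a^{(k_a)}).$$ *)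

(* Defs.v *)
From HB Require Import structures.
From mathcomp Require Import all_boot all_order all_algebra.
Set Implicit Arguments. Unset Strict Implicit. Unset Printing Implicit Defensive.
Import Order.TTheory GRing.Theory Num.Theory.
Local Open Scope ring_scope.

(* Sites are 0-based: site a of the paper (1 <= a <= N) is a-1 here.
   Site-indexed data (eta^(0), kappa, xi) are functions nat -> C, only their
   values at 0..N-1 matter. *)
Section SOV.
Variables (C : numClosedFieldType) (N p : nat) (q : C).

Definition sites := {ffun 'I_N -> 'Z_p}.

(* k_a as a natural number in {0,..,p-1} (0 outside the range of sites) *)
Definition kv (k : sites) (a : nat) : nat :=
  oapp (fun i : 'I_N => nat_of_ord (k i)) 0%N (insub a).

Definition ev (a : nat) : sites := [ffun i : 'I_N => if val i == a then 1 else 0].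

Definition eN : bool := ~~ odd N.
Definition brN : nat := (N - eN)%N.

Variable eta0 : nat -> C.
Definition etah (a h : nat) : C := q ^+ h * eta0 a.
Definition etak (k : sites) (a : nat) : C := etah a (kv k a).

Variables (kappa xi : nat -> C).
Definition Kc : C := (\prod_(n < N) kappa n) / 'i.
Definition etakA (k : sites) : C :=
  (\prod_(n < N) xi n) / \prod_(n < N.-1) etak k n.

Definition bk (k : sites) (l : C) : C :=
  Kc * etak k N.-1 ^+ eN * \prod_(a < brN) (l / etak k a - etak k a / l).

Definition lagr (k : sites) (a : 'I_brN) (l : C) : C :=
  \prod_(b < brN | b != a)
     ((l / etak k b - etak k b / l) / (etak k a / etak k b - etak k b / etak k a)).

Variable n : nat.

Definition leftA_rhs (aF : C -> C) (bra : sites -> 'rV[C]_n) (k : sites) (l : C)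
  : 'rV[C]_n :=
  (if eN then (bk k l / etak k N.-1) *:
      ((l / etakA k) *: bra (k - ev N.-1) - (etakA k / l) *: bra (k + ev N.-1))
   else 0)
  + \sum_(a < brN) (lagr k a l * aF (etak k a)) *: bra (k - ev a).

Definition rightA_rhs (abF : C -> C) (ket : sites -> 'cV[C]_n) (k : sites) (l : C)
  : 'cV[C]_n :=
  (if eN then (bk k l / etak k N.-1) *:
      ((l / etakA k) *: ket (k + ev N.-1) - (etakA k / l) *: ket (k - ev N.-1))
   else 0)
  + \sum_(a < brN) (lagr k a l * abF (etak k a)) *: ket (k + ev a).

Definition pairing (bra : sites -> 'rV[C]_n) (ket : sites -> 'cV[C]_n) (k h : sites) : C :=
  (bra k *m ket h) 0 0.

Definition normNum (aF abF : C -> C) (h : sites) : C :=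
  \prod_(a < brN) \prod_(1 <= j < (kv h a).+1) (aF (etah a j) / abF (etah a j.-1)).

Definition normDen (h : sites) : C :=
  \prod_(a < brN) \prod_(b < brN | (b < a)%N)
     (etak h a / etak h b - etak h b / etak h a).

End SOV.

(* Main.v *)
Require Import Defs.
From HB Require Import structures.
From mathcomp Require Import all_boot all_order all_algebra.
From mathcomp Require Import ring zify.
Import Order.TTheory GRing.Theory Num.Theory.
Local Open Scope ring_scope.
Set Implicit Arguments. Unset Strict Implicit.
Lemma addE N p (f g : sites N p) i : (f + g) i = f i + g i.
Proof. by rewrite ffunE. Qed.
Lemma oppE N p (f : sites N p) i : (- f) i = - f i.
Proof. by rewrite ffunE. Qed.
Lemma subE N p (f g : sites N p) i : (f - g) i = f i - g i.
Proof. by rewrite addE oppE. Qed.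
Lemma kvE N p (k : sites N p) (i : 'I_N) : kv k i = k i.
Proof. by rewrite /kv valK. Qed.
Lemma kv_lt N p (k : sites N p) a : (1 < p)%N -> (kv k a < p)%N.
Proof.
move=> p1; rewrite /kv; case: insubP => [i _ _|_] /=; last by apply: ltn_trans p1.
by rewrite -[X in (_ < X)%N](Zp_cast p1) ltn_ord.
Qed.
Lemma Dzero (C : fieldType) (x y : C) : x != 0 -> y != 0 ->
  (x / y - y / x == 0) = (x ^+ 2 == y ^+ 2).
Proof.
move=> hx hy.
have -> : x / y - y / x = (x ^+ 2 - y ^+ 2) / (x * y).
  by field; apply/andP; split.

by rewrite mulf_eq0 invr_eq0 mulf_eq0 (negPf hx) (negPf hy) /= orbF subr_eq0.
Qed.
Lemma exists_lam (C : numClosedFieldType) (s : seq C) :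
  exists l : C, l != 0 /\ forall x, x \in s -> l ^+ 2 != x ^+ 2.
Proof.
have [M [M0 HM]] : exists M : C, 0 < M /\ forall x, x \in s -> `|x| < M.
  elim: s => [|y s [M [M0 HM]]]; first by exists 1; split.
  exists (M + `|y|); split; first by rewrite ltr_wpDr.
  move=> x; rewrite inE => /orP [/eqP ->|xs].
    by rewrite ltrDr.

  by rewrite ltr_wpDr // HM.
exists M; split; first by rewrite gt_eqF.
move=> x xs; apply/negP => /eqP E.
have : `|M| ^+ 2 = `|x| ^+ 2 by rewrite -!normrX E.
rewrite gtr0_norm // => /eqP; rewrite eqrXn2 // ?ltW //.
by move/eqP => E2; move: (HM x xs); rewrite -E2 ltxx.
Qed.
Definition Dk (C : fieldType) (x : nat -> C) (a b : nat) := x a / x b - x b / x a.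
Definition Tx (C : fieldType) m (x : nat -> C) :=
  \prod_(a < m) \prod_(b < m | (b < a)%N) (x a / x b - x b / x a).
Definition Pix (C : fieldType) m (x : nat -> C) (a : 'I_m) :=
  \prod_(b < m | b != a) Dk x a b.

Lemma Tratio (C : fieldType) m (x y : nat -> C) (a : 'I_m) :
  (forall b : nat, b != a -> x b = y b) ->
  Tx m x * Pix y a = Tx m y * Pix x a.
Proof.
move=> hxy.
pose V (z : nat -> C) := \prod_(b < m | (b < a)%N) Dk z a b.
pose W (z : nat -> C) := \prod_(b < m | (a < b)%N) Dk z b a.
pose S := \prod_(b < m | (a < b)%N) (-1 : C).
pose K (z : nat -> C) := \prod_(a' < m | a' != a) \prod_(b < m | (b < a')%N && (b != a)) Dk z a' b.
have hT z : Tx m z = V z * (W z * K z).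
  rewrite /Tx (bigD1 a) //=; congr (_ * _).
  have -> : \prod_(a' < m | a' != a) \prod_(b < m | (b < a')%N) (z a' / z b - z b / z a')
     = \prod_(a' < m | a' != a) ((if (a < a')%N then Dk z a' a else 1) *
         \prod_(b < m | (b < a')%N && (b != a)) Dk z a' b).
    apply: eq_bigr => a' _; case: (ltnP a a') => hlt.
      by rewrite (bigD1 a) //=.
    rewrite mul1r; apply: eq_bigl => b; case: (ltnP b a') => //= hb.
    by apply/esym/negP => /eqP hba; move: hb; rewrite hba; lia.
  rewrite big_split /=; congr (_ * _).
  rewrite -big_mkcondr /W; apply: eq_bigl => b.
  by case: (ltnP a b) => h; [rewrite andbT; apply/negP => /eqP E; move: h; rewrite E ltnn | rewrite andbF].
have hP z : Pix z a = V z * (S * W z).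
  rewrite /Pix (bigID (fun b : 'I_m => (b < a)%N)) /=; congr (_ * _).
    apply: eq_bigl => b; case: (ltnP b a) => h; rewrite ?andbT ?andbF //.
    by apply/negP => /eqP E; move: h; rewrite E ltnn.
  rewrite -big_split /=; apply: eq_big => b.
    case: (ltnP b a) => h /=; rewrite ?andbF ?andbT.
      by apply/esym/negbTE; rewrite -leqNgt ltnW.
    by rewrite ltn_neqAle h andbT eq_sym.
  by move=> _; rewrite /Dk; ring.
have hK : K x = K y.
  apply: eq_bigr => a' ha'; apply: eq_bigr => b /andP [_ hb].
  by rewrite /Dk !hxy.
rewrite !hT !hP hK; ring.
Qed.
Lemma sh1 (V : zmodType) (x u v : V) : x + u + (v - u) = x + v.
Proof. by rewrite addrCA addrK addrC. Qed.
Lemma sh2 (V : zmodType) (x u v : V) : x - u + (v + u) = x + v.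
Proof. by rewrite addrCA addrNK addrC. Qed.
Lemma sh3 (V : zmodType) (x u v : V) : x + u - v = x + (u - v).
Proof. by rewrite -addrA. Qed.

Lemma neq_shift N p (h d : sites N p) (i : 'I_N) : d i != 0 -> h + d != h.
Proof.
move=> hd; apply/negP => /eqP E; have := congr1 (fun f : sites N p => f i) E.
rewrite addE -[X in _ = X]addr0 => /addrI hd0; by rewrite hd0 eqxx in hd.
Qed.

Lemma evE N p a (i : 'I_N) : ev N p a i = if val i == a then 1 else 0.
Proof. by rewrite ffunE. Qed.

Lemma val_Zp_add1 p (x : 'Z_p) : (1 < p)%N -> (x.+1 < p)%N -> val (x + 1) = x.+1.
Proof.
move=> p1 hx; rewrite add_Zp_1 /= modn_small //.
exact: (leq_trans hx (eq_leq (esym (Zp_cast p1)))).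
Qed.

Lemma val_Zp_sub1 p (x : 'Z_p) : x != 0 -> (val (x - 1)).+1 = val x.
Proof.
move=> hx; rewrite sub_Zp_1 /=.
move: hx; case: x => [[|y] hy] //= _.
by rewrite modnDr modn_small // ltnW.
Qed.

Section Main.
Variables (C : numClosedFieldType) (N p : nat) (q : C)
  (eta0 kappa xi : nat -> C) (aF abF : C -> C) (n : nat)
  (A B : C -> 'M[C]_n)
  (bra : sites N p -> 'rV[C]_n) (ket : sites N p -> 'cV[C]_n).
Hypotheses (hN : (1 <= N)%N) (hp3 : (3 <= p)%N) (hpodd : odd p)
  (hqp : q ^+ p = 1) (hq2 : p.-primitive_root (q ^+ 2))
  (heta0 : forall a, (a < N)%N -> eta0 a != 0)
  (hetad : forall a b, (a < brN N)%N -> (b < brN N)%N -> a != b ->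
      forall h h', etah q eta0 a h ^+ 2 != etah q eta0 b h' ^+ 2)
  (hxi : forall m, (m < N)%N -> xi m != 0)
  (hK : Kc N kappa != 0)
  (habF : forall a j, (a < N)%N -> abF (etah q eta0 a j) != 0)
  (hbraB : forall (l : C) k, l != 0 ->
      bra k *m B l = bk q eta0 kappa k l *: bra k)
  (hbraA : forall (l : C) k, l != 0 ->
      bra k *m A l = leftA_rhs q eta0 kappa xi aF bra k l)
  (hketB : forall (l : C) k, l != 0 ->
      B l *m ket k = bk q eta0 kappa k l *: ket k)
  (hketA : forall (l : C) k, l != 0 ->
      A l *m ket k = rightA_rhs q eta0 kappa xi abF ket k l).

Local Notation ek := (@etak C N p q eta0).
Local Notation pr := (pairing bra ket).

Lemma p1 : (1 < p)%N. Proof. by apply: leq_trans hp3. Qed.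

Lemma q0 : q != 0.
Proof.
apply/negP => /eqP q0; move: hqp; rewrite q0 expr0n.
have -> : (p == 0%N) = false by apply/negbTE; rewrite -lt0n; apply: leq_trans hp3.
by move/eqP; rewrite eq_sym oner_eq0.
Qed.

Lemma brN_le : (brN N <= N)%N. Proof. exact: leq_subr. Qed.

Lemma ek_nz k a : (a < N)%N -> ek k a != 0.
Proof. by move=> ha; apply: mulf_neq0; [apply: expf_neq0; exact: q0 | exact: heta0]. Qed.

Lemma ek_sq1 k h a : (a < N)%N -> kv k a != kv h a -> ek k a ^+ 2 != ek h a ^+ 2.
Proof.
move=> ha hne; rewrite /etak /etah !exprMn -!exprM !(mulnC _ 2) !exprM.
apply/negP => /eqP /(mulIf (expf_neq0 2 (heta0 ha))) /eqP.
rewrite (eq_prim_root_expr hq2) !modn_small ?kv_lt ?p1 //.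
by apply/negP.
Qed.

Lemma ek_sq2 k h a b : (a < brN N)%N -> (b < brN N)%N -> a != b ->
  ek k a ^+ 2 != ek h b ^+ 2.
Proof. by move=> ha hb hab; apply: hetad. Qed.

Lemma ek_neq1 k h a : (a < N)%N -> kv k a != kv h a -> ek k a != ek h a.
Proof. by move=> ha hne; apply: contra (ek_sq1 ha hne) => /eqP ->. Qed.

Lemma orth k h : k != h -> pr k h = 0.
Proof.
move=> hkh.
have key l : l != 0 -> bk q eta0 kappa k l * pr k h = bk q eta0 kappa h l * pr k h.
  move=> l0; rewrite /pairing.
  have := congr1 (fun M : 'M[C]_(1,1) => M 0 0) (mulmxA (bra k) (B l) (ket h)).
  by rewrite /= hbraB // hketB // -scalemxAr -scalemxAl !mxE => ->.
suff [l [l0 hl]] : exists l, l != 0 /\ bk q eta0 kappa k l != bk q eta0 kappa h l.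
  apply/eqP; move: (key l l0) => /eqP; rewrite -subr_eq0 -mulrBl mulf_eq0.
  by rewrite subr_eq0 (negPf hl).
have hN1 : (N.-1 < N)%N by rewrite prednK.
case: (boolP [exists a : 'I_(brN N), kv k a != kv h a]).
  case/existsP => a ha.
  have haN : (a < N)%N by apply: leq_trans (ltn_ord a) brN_le.
  exists (ek k a); split; first exact: ek_nz.
  rewrite /bk (bigD1 a) //= subrr mul0r mulr0 eq_sym.
  apply: mulf_neq0; first by apply: mulf_neq0 => //; apply: expf_neq0; exact: ek_nz.
  apply/prodf_neq0 => b _.
  have hbN : (b < N)%N by apply: leq_trans (ltn_ord b) brN_le.
  rewrite Dzero ?ek_nz //.
  case: (eqVneq b a) => [->|hba]; first exact: ek_sq1.
  by apply: ek_sq2 => //; rewrite eq_sym.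
rewrite negb_exists => /forallP hall.
have hagree (a : 'I_(brN N)) : kv k a = kv h a by move: (hall a); rewrite negbK => /eqP.
have [i hi] : exists i : 'I_N, k i != h i.
  apply/existsP; apply: contraR hkh; rewrite negb_exists => /forallP H.
  by apply/eqP/ffunP => i; move: (H i); rewrite negbK => /eqP.
have hib : ~~ (i < brN N)%N.
  apply/negP => hib; move: (hagree (Ordinal hib)) => /=.
  by rewrite -[i in kv k i]/(nat_of_ord i) -[i in kv h i]/(nat_of_ord i) !kvE => /val_inj E; rewrite E eqxx in hi.
have heN : eN N = true.
  by case e: (eN N) => //; move: hib; rewrite /brN e subn0 ltn_ord.
have hiN : nat_of_ord i = N.-1.
  move: hib; rewrite /brN heN -leqNgt => h1; have := ltn_ord i; lia.
have [l [l0 hl]] := exists_lam [seq ek k a | a <- iota 0 (brN N)].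
exists l; split => //.
have hP : \prod_(a < brN N) (l / ek k a - ek k a / l) != 0.
  apply/prodf_neq0 => a _.
  have haN : (a < N)%N by apply: leq_trans (ltn_ord a) brN_le.
  rewrite Dzero ?ek_nz //; apply: hl; apply/mapP; exists (nat_of_ord a) => //.
  by rewrite mem_iota /= add0n.
have -> : bk q eta0 kappa h l = Kc N kappa * ek h N.-1 ^+ eN N *
     \prod_(a < brN N) (l / ek k a - ek k a / l).
  by rewrite /bk; congr (_ * _); apply: eq_bigr => a _; rewrite /etak hagree.
rewrite /bk heN !expr1; apply/negP => /eqP E.
have : Kc N kappa * (\prod_(a < brN N) (l / ek k a - ek k a / l)) * (ek k N.-1 - ek h N.-1) = 0.
  by rewrite mulrBr; apply/eqP; rewrite subr_eq0; apply/eqP; move: E; rewrite !(mulrAC _ _ (\prod_(_ < _) _)).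
move/eqP; rewrite (mulf_eq0 (_ * _)) (mulf_eq0 (Kc N kappa)) (negPf hK) (negPf hP) /= subr_eq0; apply/negP.
apply: ek_neq1 => //.
by rewrite -hiN !kvE.
Qed.


Lemma e00D (M1 M2 : 'M[C]_(1,1)) : (M1 + M2) 0 0 = M1 0 0 + M2 0 0.
Proof. by rewrite mxE. Qed.
Lemma e00B (M1 M2 : 'M[C]_(1,1)) : (M1 - M2) 0 0 = M1 0 0 - M2 0 0.
Proof. by rewrite !mxE. Qed.
Lemma e00Z c (M1 : 'M[C]_(1,1)) : (c *: M1) 0 0 = c * M1 0 0.
Proof. by rewrite mxE. Qed.
Lemma e00S m (F : 'I_m -> 'M[C]_(1,1)) : (\sum_(i < m) F i) 0 0 = \sum_(i < m) F i 0 0.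
Proof. by rewrite summxE. Qed.

Lemma pairA k h l : l != 0 ->
  (if eN N then (bk q eta0 kappa k l / ek k N.-1) *
     ((l / etakA q eta0 xi k) * pr (k - ev N p N.-1) h
      - (etakA q eta0 xi k / l) * pr (k + ev N p N.-1) h) else 0)
  + \sum_(a < brN N) (lagr q eta0 k a l * aF (ek k a)) * pr (k - ev N p a) h
  = (if eN N then (bk q eta0 kappa h l / ek h N.-1) *
     ((l / etakA q eta0 xi h) * pr k (h + ev N p N.-1)
      - (etakA q eta0 xi h / l) * pr k (h - ev N p N.-1)) else 0)
  + \sum_(a < brN N) (lagr q eta0 h a l * abF (ek h a)) * pr k (h + ev N p a).
Proof.
move=> l0; have := congr1 (fun M : 'M[C]_(1,1) => M 0 0) (mulmxA (bra k) (A l) (ket h)).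
rewrite /= hbraA // hketA // /leftA_rhs /rightA_rhs /pairing => E.
move: E; rewrite mulmxDr mulmxDl !e00D mulmx_suml mulmx_sumr !e00S.
under [X in _ + X = _]eq_bigr do rewrite -scalemxAr e00Z.
under [X in _ = _ + X]eq_bigr do rewrite -scalemxAl e00Z.
case: (eN N); last by rewrite mul0mx mulmx0 !mxE => <-.
rewrite -scalemxAl -scalemxAr mulmxBl mulmxBr -!scalemxAl -!scalemxAr !e00Z !e00B !e00Z.
by move=> <-.
Qed.

Lemma kv_out (k : sites N p) b : (N <= b)%N -> kv k b = 0%N.
Proof. by move=> hb; rewrite /kv insubN // -leqNgt. Qed.

Lemma kv_add k a b : (a < N)%N -> ((kv k a).+1 < p)%N ->
  kv (k + ev N p a) b = if b == a then (kv k a).+1 else kv k b.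
Proof.
move=> ha hk; case: (ltnP b N) => hb; last first.
  by rewrite (kv_out _ hb) (kv_out k hb) ifN //; apply/negP => /eqP E; move: hb; rewrite E leqNgt ha.
rewrite -[b]/(nat_of_ord (Ordinal hb)) !kvE addE evE.
case: eqP => [E|_]; last by rewrite addr0.
rewrite val_Zp_add1 ?p1 //.
  by rewrite -[a]E -[b]/(nat_of_ord (Ordinal hb)) kvE.
by move: hk; rewrite -[a]E -[b]/(nat_of_ord (Ordinal hb)) kvE.
Qed.

Lemma kv_sub (k : sites N p) (i : 'I_N) : k i != 0 ->
  ((kv (k - ev N p i)%R i).+1 < p)%N /\ (kv (k - ev N p i)%R i).+1 = kv k i /\
  forall b : nat, b != i -> kv (k - ev N p i)%R b = kv k b.
Proof.
move=> hi.
have E1 : (kv (k - ev N p i) i).+1 = kv k i.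
  by rewrite !kvE subE evE eqxx val_Zp_sub1.
split; first by rewrite E1 kv_lt // p1.
split => // b hb; case: (ltnP b N) => hbN; last by rewrite !kv_out.
rewrite -[b]/(nat_of_ord (Ordinal hbN)) !kvE subE evE ifN ?subr0 //.
Qed.

Lemma pr_ne k h (i : 'I_N) (d : sites N p) : k = h + d -> d i != 0 -> pr k h = 0.
Proof. by move=> -> hd; apply: orth; exact: neq_shift hd. Qed.

Lemma pr_ne' k h (i : 'I_N) (d : sites N p) : h = k + d -> d i != 0 -> pr k h = 0.
Proof. by move=> -> hd; apply: orth; rewrite eq_sym; exact: neq_shift hd. Qed.

Lemma nDen h : normDen q eta0 h = Tx (brN N) (ek h). Proof. by []. Qed.

Lemma Pix_nz h (a : 'I_(brN N)) : Pix (ek h) a != 0.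
Proof.
apply/prodf_neq0 => b hb.
have haN : (a < N)%N by apply: leq_trans (ltn_ord a) brN_le.
have hbN : (b < N)%N by apply: leq_trans (ltn_ord b) brN_le.
rewrite /Dk Dzero ?ek_nz //; apply: ek_sq2 => //; by rewrite eq_sym.
Qed.

Lemma stepA h (a : 'I_(brN N)) : ((kv h a).+1 < p)%N ->
  pr (h + ev N p a) (h + ev N p a) * normDen q eta0 (h + ev N p a)
  = pr h h * normDen q eta0 h * aF (etah q eta0 a (kv h a).+1)
      / abF (etah q eta0 a (kv h a)).
Proof.
move=> hlt; set k := h + ev N p a.
have haN : (a < N)%N by apply: leq_trans (ltn_ord a) brN_le.
pose ia := Ordinal haN.
have kva : kv k a = (kv h a).+1 by rewrite /k kv_add // eqxx.
have kvb (b : nat) : b != a -> kv k b = kv h b by move=> hb; rewrite /k kv_add // ifN.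
have ekb (b : nat) : b != a -> ek k b = ek h b by move=> hb; rewrite /etak kvb.
have eka : ek k a = etah q eta0 a (kv h a).+1 by rewrite /etak kva.
have eva : ev N p a ia = 1 by rewrite evE eqxx.
have evc (c : nat) : c != a -> ev N p c ia = 0.
  by move=> hc; rewrite evE /= eq_sym (negPf hc).
have l0 : ek k a != 0 by apply: ek_nz.
have E : lagr q eta0 k a (ek k a) * aF (ek k a) * pr h h =
    lagr q eta0 h a (ek k a) * abF (ek h a) * pr k k.
 have := pairA k h l0.
have hk : k - ev N p a = h by rewrite /k addrK.
rewrite (bigD1 a) //= [in X in _ = _ + X](bigD1 a) //= hk -/k.
rewrite big1 => [|c hc]; last first.
  rewrite (@pr_ne _ _ ia (ev N p a - ev N p c)) ?mulr0 //; first by rewrite /k sh3.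
  by rewrite subE eva evc // subr0 oner_neq0.
rewrite big1 => [|c hc]; last first.
  rewrite (@pr_ne' _ _ ia (ev N p c - ev N p a)) ?mulr0 //; last first.
    by rewrite subE eva evc // sub0r oppr_eq0 oner_neq0.
  by rewrite /k sh1.
case heN: (eN N); last by rewrite !add0r !addr0.
  have hbr : brN N = N.-1 by rewrite /brN heN subn1.
  have haN1 : N.-1 != nat_of_ord a by rewrite -hbr neq_ltn ltn_ord orbT.
  have e1 : ev N p N.-1 ia = 0 by apply: evc.
  rewrite (@pr_ne (k - ev N p N.-1) h ia (ev N p a - ev N p N.-1)); first last.
  - by rewrite subE eva e1 subr0 oner_neq0.
  - by rewrite /k sh3.
  rewrite (@pr_ne (k + ev N p N.-1) h ia (ev N p a + ev N p N.-1)); first last.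
  - by rewrite addE eva e1 addr0 oner_neq0.
  - by rewrite /k addrA.
  rewrite (@pr_ne' k (h + ev N p N.-1) ia (ev N p N.-1 - ev N p a)); first last.
  - by rewrite subE eva e1 sub0r oppr_eq0 oner_neq0.
  - by rewrite /k sh1.
  rewrite (@pr_ne' k (h - ev N p N.-1) ia (- ev N p N.-1 - ev N p a)); first last.
  - by rewrite subE oppE eva e1 oppr0 sub0r oppr_eq0 oner_neq0.
  - by rewrite /k sh1.
  by rewrite !mulr0 subrr !mulr0 !add0r !addr0.
have L1 : lagr q eta0 k a (ek k a) = 1.
  rewrite /lagr; apply: big1 => b hb; rewrite divff //.
  have hbN : (b < N)%N by apply: leq_trans (ltn_ord b) brN_le.
  rewrite Dzero ?ek_nz //; apply: ek_sq2 => //; by rewrite eq_sym.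
have L2 : lagr q eta0 h a (ek k a) = Pix (ek k) a / Pix (ek h) a.
  rewrite /lagr /Pix -prodf_div; apply: eq_bigr => b hb.
  by rewrite /Dk (ekb _ hb).
rewrite L1 L2 mul1r in E.
have Tr := Tratio ekb.
rewrite -eka -[etah q eta0 a (kv h a)]/(ek h a) !nDen.
have Pnz := Pix_nz h a.
have bnz : abF (ek h a) != 0 := habF (kv h a) haN.
have eT : Tx (brN N) (ek k) = Tx (brN N) (ek h) * Pix (ek k) a / Pix (ek h) a.
  by rewrite -Tr mulfK.
have E' : pr k k * (Pix (ek k) a / Pix (ek h) a) = aF (ek k a) * pr h h / abF (ek h a).
  by rewrite E mulrAC mulfK // mulrC.
rewrite eT.
have -> : pr k k * (Tx (brN N) (ek h) * Pix (ek k) a / Pix (ek h) a) =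
  Tx (brN N) (ek h) * (pr k k * (Pix (ek k) a / Pix (ek h) a)) by ring.
by rewrite E'; ring.
Qed.

Lemma two_nz : (1 + 1 : 'Z_p) != 0.
Proof.
apply/eqP => H; have := congr1 (@nat_of_ord _) H; rewrite -mulr2n val_Zp_nat ?p1 // modn_small //.
Qed.

Lemma bk_div k l : eN N = true ->
  bk q eta0 kappa k l / ek k N.-1 = Kc N kappa * \prod_(a < brN N) (l / ek k a - ek k a / l).
Proof.
have hN1 : (N.-1 < N)%N by rewrite prednK.
by move=> heN; rewrite /bk heN expr1 mulrAC mulfK // ek_nz.
Qed.

Lemma etakA_nz (k : sites N p) : etakA q eta0 xi k != 0.
Proof.
apply: mulf_neq0; first by apply/prodf_neq0 => i _; apply: hxi.
rewrite invr_neq0 //; apply/prodf_neq0 => i _; apply: ek_nz.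
by apply: leq_trans (ltn_ord i) _; rewrite leq_pred.
Qed.

Lemma stepE h : eN N = true -> ((kv h N.-1).+1 < p)%N ->
  [/\ pr (h + ev N p N.-1) (h + ev N p N.-1) = pr h h,
      normDen q eta0 (h + ev N p N.-1) = normDen q eta0 h &
      normNum q eta0 aF abF (h + ev N p N.-1) = normNum q eta0 aF abF h].
Proof.
move=> heN hlt; set k := h + ev N p N.-1.
have hN1 : (N.-1 < N)%N by rewrite prednK.
have hbr : brN N = N.-1 by rewrite /brN heN subn1.
pose iN := Ordinal hN1.
have kvb (b : nat) : b != N.-1 -> kv k b = kv h b by move=> hb; rewrite /k kv_add // ifN.
have ekb (b : nat) : b != N.-1 -> ek k b = ek h b by move=> hb; rewrite /etak kvb.
have hne (a : 'I_(brN N)) : nat_of_ord a != N.-1 by rewrite neq_ltn -hbr ltn_ord.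
have ev1 : ev N p N.-1 iN = 1 by rewrite evE eqxx.
have evc (c : nat) : c != N.-1 -> ev N p c iN = 0.
  by move=> hc; rewrite evE /= eq_sym (negPf hc).
split; last first.
- by rewrite /normNum; apply: eq_bigr => a _; rewrite kvb.
- by rewrite !nDen /Tx; apply: eq_bigr => a _; apply: eq_bigr => b _; rewrite !ekb.
have [l [l0 hl]] := exists_lam [seq ek h a | a <- iota 0 (brN N)].
have := pairA k h l0.
have hk : k - ev N p N.-1 = h by rewrite /k addrK.
rewrite heN hk -/k.
rewrite big1 => [|c hc]; last first.
  rewrite (@pr_ne _ _ iN (ev N p N.-1 - ev N p c)) ?mulr0 //; first by rewrite /k sh3.
  by rewrite subE ev1 evc ?hne // subr0 oner_neq0.
rewrite big1 => [|c hc]; last first.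
  rewrite (@pr_ne' _ _ iN (ev N p c - ev N p N.-1)) ?mulr0 //; last first.
    by rewrite subE ev1 evc ?hne // sub0r oppr_eq0 oner_neq0.
  by rewrite /k sh1.
rewrite (@pr_ne (k + ev N p N.-1) h iN (ev N p N.-1 + ev N p N.-1)); first last.
- by rewrite addE ev1 two_nz.
- by rewrite /k addrA.
rewrite (@pr_ne' k (h - ev N p N.-1) iN (- ev N p N.-1 - ev N p N.-1)); first last.
- by rewrite subE oppE ev1 -opprD oppr_eq0 two_nz.
- by rewrite /k sh1.
rewrite !mulr0 !subr0 !addr0 !bk_div //.
have eA : etakA q eta0 xi k = etakA q eta0 xi h.
  rewrite /etakA; congr (_ / _); apply: eq_bigr => i _; rewrite ekb //.
  by rewrite neq_ltn ltn_ord.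
have eP : \prod_(a < brN N) (l / ek k a - ek k a / l) = \prod_(a < brN N) (l / ek h a - ek h a / l).
  by apply: eq_bigr => a _; rewrite ekb.
rewrite eA eP !mulrA => E; apply/esym; apply: (mulfI _ E).
rewrite mulf_neq0 ?invr_neq0 ?etakA_nz // mulf_neq0 // mulf_neq0 //.
apply/prodf_neq0 => a _.
have haN : (a < N)%N by apply: leq_trans (ltn_ord a) brN_le.
rewrite Dzero ?ek_nz //; apply: hl; apply/mapP; exists (nat_of_ord a) => //.
by rewrite mem_iota /= add0n.
Qed.

Lemma numStep h (a : 'I_(brN N)) : ((kv h a).+1 < p)%N ->
  normNum q eta0 aF abF (h + ev N p a) = normNum q eta0 aF abF h *
    aF (etah q eta0 a (kv h a).+1) / abF (etah q eta0 a (kv h a)).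
Proof.
move=> hlt.
have haN : (a < N)%N by apply: leq_trans (ltn_ord a) brN_le.
rewrite /normNum (bigD1 a) //= [in RHS](bigD1 a) //= kv_add // eqxx.
rewrite big_nat_recr //=.
have -> : \prod_(i < brN N | i != a)
    \prod_(1 <= j < (kv (h + ev N p a) i).+1) (aF (etah q eta0 i j) / abF (etah q eta0 i j.-1))
  = \prod_(i < brN N | i != a)
    \prod_(1 <= j < (kv h i).+1) (aF (etah q eta0 i j) / abF (etah q eta0 i j.-1)).
  by apply: eq_bigr => i hi; rewrite kv_add // ifN.
by rewrite mulrAC !mulrA.
Qed.

Lemma normDen_nz (h : sites N p) : normDen q eta0 h != 0.
Proof.
rewrite nDen; apply/prodf_neq0 => a _; apply/prodf_neq0 => b hb.
have haN : (a < N)%N by apply: leq_trans (ltn_ord a) brN_le.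
have hbN : (b < N)%N by apply: leq_trans (ltn_ord b) brN_le.
rewrite Dzero ?ek_nz //; apply: ek_sq2 => //.
by rewrite neq_ltn hb orbT.
Qed.

Definition msr (h : sites N p) := (\sum_(i < N) kv h i)%N.

Lemma invariant (h : sites N p) : pr h h * normDen q eta0 h =
  (pr 0 0 * normDen q eta0 (0 : sites N p)) * normNum q eta0 aF abF h.
Proof.
have zero_case (g : sites N p) : [forall i, g i == 0] ->
    pr g g * normDen q eta0 g = (pr 0 0 * normDen q eta0 (0 : sites N p)) * normNum q eta0 aF abF g.
  move/forallP => g0.
  have -> : g = 0 by apply/ffunP => i; rewrite ffunE; apply/eqP.
  suff -> : normNum q eta0 aF abF (0 : sites N p) = 1 by rewrite mulr1.
  rewrite /normNum big1 // => a _.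
  have haN : (a < N)%N by apply: leq_trans (ltn_ord a) brN_le.
  rewrite -[nat_of_ord a]/(nat_of_ord (Ordinal haN)) kvE ffunE /=.
  by rewrite big_geq.
suff : forall m g, (msr g <= m)%N ->
    pr g g * normDen q eta0 g = (pr 0 0 * normDen q eta0 (0 : sites N p)) * normNum q eta0 aF abF g.
  by move=> H; apply: (H (msr h)).
elim=> [|m IH] g hm; case: (boolP [forall i, g i == 0]) => [|/forallPn [i hi]];
  try exact: zero_case.
  have := kv_lt g i p1; move: hm; rewrite /msr (bigD1 i) //= kvE.
  by move: hi; case: (g i) => [[|x] hx].
have [hlt [E1 Eo]] := kv_sub hi.
set g' := (g - ev N p i)%R.
have Hg : g' + ev N p i = g by rewrite /g' subrK.
have hm' : (msr g' <= m)%N.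
  move: hm; rewrite /msr (bigD1 i) //= [in X in (X <= m)%N](bigD1 i) //= -E1.
  have -> : (\sum_(j < N | j != i) kv g j = \sum_(j < N | j != i) kv g' j)%N.
    by apply: eq_bigr => j hj; rewrite Eo.
  by rewrite addSn ltnS.
have IHg := IH g' hm'.
case: (ltnP i (brN N)) => hib.
  pose a := Ordinal hib.
  have := stepA (a := a) hlt.
  rewrite -/(nat_of_ord i) -[ev N p a]/(ev N p i) Hg => ->.
  have := numStep (h := g') (a := a) hlt.
  rewrite -[ev N p a]/(ev N p i) Hg => ->.
  rewrite IHg; ring.
have heN : eN N = true.
  by case e: (eN N) => //; move: hib; rewrite /brN e subn0 leqNgt ltn_ord.
have hiN : nat_of_ord i = N.-1.
  move: hib; rewrite /brN heN; have := ltn_ord i; lia.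
rewrite hiN in hlt.
have [E2 E3 E4] := stepE heN hlt.
by rewrite -hiN Hg in E2 E3 E4; rewrite E2 E3 E4.
Qed.

End Main.
Theorem mainTheorem1 (C : numClosedFieldType) (N p : nat) (q : C)
  (eta0 kappa xi : nat -> C) (aF abF : C -> C) (n : nat)
  (A B : C -> 'M[C]_n)
  (bra : sites N p -> 'rV[C]_n) (ket : sites N p -> 'cV[C]_n)
  (hN : (1 <= N)%N) (hp3 : (3 <= p)%N) (hpodd : odd p)
  (hqp : q ^+ p = 1) (hq2 : p.-primitive_root (q ^+ 2))
  (heta0 : forall a, (a < N)%N -> eta0 a != 0)
  (hetad : forall a b, (a < brN N)%N -> (b < brN N)%N -> a != b ->
      forall h h', etah q eta0 a h ^+ 2 != etah q eta0 b h' ^+ 2)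
  (hkappa : forall m, (m < N)%N -> kappa m != 0)
  (hxi : forall m, (m < N)%N -> xi m != 0)
  (hK : Kc N kappa != 0)
  (habF : forall a j, (a < N)%N -> abF (etah q eta0 a j) != 0)
  (hbra_basis : basis_of fullv [seq bra k | k : sites N p])
  (hket_basis : basis_of fullv [seq ket k | k : sites N p])
  (hbraB : forall (l : C) k, l != 0 ->
      bra k *m B l = bk q eta0 kappa k l *: bra k)
  (hbraA : forall (l : C) k, l != 0 ->
      bra k *m A l = leftA_rhs q eta0 kappa xi aF bra k l)
  (hketB : forall (l : C) k, l != 0 ->
      B l *m ket k = bk q eta0 kappa k l *: ket k)
  (hketA : forall (l : C) k, l != 0 ->
      A l *m ket k = rightA_rhs q eta0 kappa xi abF ket k l) :
  (forall k h : sites N p, k != h -> pairing bra ket k h = 0) /\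
  (exists CN : C, forall h : sites N p,
      pairing bra ket h h =
        CN * normNum q eta0 aF abF h / normDen q eta0 h).
Proof.
split.
  move=> k h hkh; exact: (orth hN hp3 hpodd hqp hq2 heta0 hetad hK hbraB hketB hkh).
exists (pairing bra ket 0 0 * normDen q eta0 (0 : sites N p)); move=> h.
have E : pairing bra ket h h * normDen q eta0 h =
  (pairing bra ket 0 0 * normDen q eta0 (0 : sites N p)) * normNum q eta0 aF abF h.
  exact: (invariant hN hp3 hpodd hqp hq2 heta0 hetad hxi hK habF hbraB hbraA hketB hketA h).
have Dnz : normDen q eta0 h != 0 by exact: (normDen_nz hp3 hqp heta0 hetad h).
by rewrite -E mulfK.
Qed.
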